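(* Let $X$ be a Borel space, $\mu$ a Borel probability measure on $X$, $L_\iota\ge0$, and $\iota:X\times\mathbb{R}^l\to\mathbb{R}$ an $L_\iota$-LG integrand, with induced integral functional $I_\iota:L^2(\mu,\mathbb{R}^l)\to\mathbb{R}$. Then for all $f\in L^2(\mu,\mathbb{R}^l)$, $\nabla I_\iota(f)(x)=\nabla_z\iota(x,f(x))$ for $\mu$-a.e. $x$, and $I_\iota$ is $L_\iota$-LG (on $L^2(\mu,\mathbb{R}^l)$). If moreover $\iota$ is also a $\lambda_\iota$-PL integrand for some $\lambda_\iota>0$, then $I_\iota$ is $\lambda_\iota$-PL (on $L^2(\mu,\mathbb{R}^l)$).
   Context: $L^2(\mu,\mathbb{R}^l)$ is the Hilbert space of $\mu$-equivalence classes of square-integrable $\mathbb{R}^l$-valued functions. An integrand is a function $\iota:X\times\mathbb{R}^l\to\mathbb{R}$ that is finite, measurable in $x$ and differentiable in $z$; its integral functional is $I_\iota(f)=\int\iota(x,f(x))\,d\mu(x)$, assumed to be a well-defined real number for every $f\in L^2(\mu,\mathbb{R}^l)$. A function $g$ on a Hilbert space $H$ is $L$-LG on a set $E$ if it is Fréchet differentiable there and $\|\nabla g(u)-\nabla g(v)\|\le L\|u-v\|$ for $u,v\in E$; if $g$ is bounded below with $g_*=\inf_Hg\in\mathbb{R}$, it is $\lambda$-PL on $E$ ($\lambda>0$) if $\tfrac12\|\nabla g(u)\|^2\ge\lambda(g(u)-g_* )$ for $u\in E$. $\iota$ is an $L$-LG integrand if $\iota(x,\cdot)$ is $L$-LG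 on $\mathbb{R}^l$ for $\mu$-a.e. $x$, and a $\lambda$-PL integrand if $\iota(x,\cdot)$ is $\lambda$-PL on $\mathbb{R}^l$ for $\mu$-a.e. $x$. *)

(* Defs.v *)
From HB Require Import structures.
From mathcomp Require Import all_boot all_order all_algebra.
From mathcomp Require Import all_classical all_reals all_analysis.
Set Implicit Arguments. Unset Strict Implicit. Unset Printing Implicit Defensive.
Import Order.TTheory GRing.Theory Num.Theory.
Import numFieldNormedType.Exports.
Local Open Scope classical_set_scope.
Local Open Scope ring_scope.

Section Defs.
Context {R : realType}.

Definition dotRl (l : nat) (u v : 'rV[R]_l) : R := \sum_(i < l) u 0 i * v 0 i.
Definition normRl (l : nat) (u : 'rV[R]_l) : R := Num.sqrt (dotRl u u).

Definition has_grad_Rl (l : nat) (g : 'rV[R]_l -> R) (z v : 'rV[R]_l) : Prop :=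
  forall e : R, 0 < e -> exists2 d : R, 0 < d &
    forall h : 'rV[R]_l, normRl h < d ->
      `| g (z + h) - g z - dotRl v h | <= e * normRl h.

Definition LG_Rl (l : nat) (L : R) (g : 'rV[R]_l -> R) : Prop :=
  (forall u, exists v, has_grad_Rl g u v) /\
  (forall u w gu gw, has_grad_Rl g u gu -> has_grad_Rl g w gw ->
     normRl (gu - gw) <= L * normRl (u - w)).

Definition PL_Rl (l : nat) (lam : R) (g : 'rV[R]_l -> R) : Prop :=
  has_lbound (range g) /\
  (forall u, exists v, has_grad_Rl g u v) /\
  (forall u gu, has_grad_Rl g u gu ->
     lam * (g u - inf (range g)) <= 2^-1 * normRl gu ^+ 2).

Context {d : measure_display} {X : measurableType d}.
Variable mu : {measure set X -> \bar R}.

(** f is (a representative of an element of) L^2(mu, R^l):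
    measurable (componentwise, i.e. Borel measurable into R^l) and
    square-integrable. *)
Definition L2 (l : nat) (f : X -> 'rV[R]_l) : Prop :=
  (forall i : 'I_l, measurable_fun [set: X] (fun x => f x 0 i)) /\
  mu.-integrable [set: X] (fun x => (dotRl (f x) (f x))%:E).

Definition ipL2 (l : nat) (f g : X -> 'rV[R]_l) : R :=
  Rintegral mu [set: X] (fun x => dotRl (f x) (g x)).
Definition normL2 (l : nat) (f : X -> 'rV[R]_l) : R := Num.sqrt (ipL2 f f).

Definition has_grad_L2 (l : nat) (J : (X -> 'rV[R]_l) -> R)
    (f G : X -> 'rV[R]_l) : Prop :=
  forall e : R, 0 < e -> exists2 dl : R, 0 < dl &
    forall h : X -> 'rV[R]_l, L2 h -> normL2 h < dl ->
      `| J (fun x => f x + h x) - J f - ipL2 G h | <= e * normL2 h.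

Definition LG_L2 (l : nat) (L : R) (J : (X -> 'rV[R]_l) -> R) : Prop :=
  (forall f, L2 f -> exists G, L2 G /\ has_grad_L2 J f G) /\
  (forall f g Gf Gg, L2 f -> L2 g -> L2 Gf -> L2 Gg ->
     has_grad_L2 J f Gf -> has_grad_L2 J g Gg ->
     normL2 (fun x => Gf x - Gg x) <= L * normL2 (fun x => f x - g x)).

Definition PL_L2 (l : nat) (lam : R) (J : (X -> 'rV[R]_l) -> R) : Prop :=
  has_lbound (J @` (@L2 l)) /\
  (forall f, L2 f -> exists G, L2 G /\ has_grad_L2 J f G) /\
  (forall f G, L2 f -> L2 G -> has_grad_L2 J f G ->
     lam * (J f - inf (J @` (@L2 l))) <= 2^-1 * normL2 G ^+ 2).

Definition Ifun (l : nat) (iota : X -> 'rV[R]_l -> R) (f : X -> 'rV[R]_l) : R :=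
  Rintegral mu [set: X] (fun x => iota x (f x)).

Definition integrand (l : nat) (iota : X -> 'rV[R]_l -> R) : Prop :=
  (forall z, measurable_fun [set: X] (fun x => iota x z)) /\
  (forall x z, exists v, has_grad_Rl (iota x) z v) /\
  (forall f, L2 f -> mu.-integrable [set: X] (fun x => (iota x (f x))%:E)).

End Defs.

(* Main.v *)
Require Import Defs.
From HB Require Import structures.
From mathcomp Require Import all_boot all_order all_algebra.
From mathcomp Require Import all_classical all_reals all_analysis.
From mathcomp Require Import ring lra.
From mathcomp Require Import measurable_realfun.
Import Order.TTheory GRing.Theory Num.Theory.
Import numFieldNormedType.Exports.
Local Open Scope classical_set_scope.
Local Open Scope ring_scope.
Set Implicit Arguments. Unset Strict Implicit. Unset Printing Implicit Defensive.

Section FinDim.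
Context {R : realType} {l : nat}.
Implicit Types u v w : 'rV[R]_l.

Lemma dotC u v : dotRl u v = dotRl v u.
Proof. by apply: eq_bigr => i _; rewrite mulrC. Qed.

Lemma dotDl u v w : dotRl (u + v) w = dotRl u w + dotRl v w.
Proof. by rewrite /dotRl -big_split; apply: eq_bigr => i _; rewrite mxE mulrDl. Qed.

Lemma dotDr u v w : dotRl w (u + v) = dotRl w u + dotRl w v.
Proof. by rewrite dotC dotDl !(dotC w). Qed.

Lemma dotZl (t : R) u v : dotRl (t *: u) v = t * dotRl u v.
Proof. by rewrite /dotRl mulr_sumr; apply: eq_bigr => i _; rewrite mxE mulrA. Qed.

Lemma dotZr (t : R) u v : dotRl v (t *: u) = t * dotRl v u.
Proof. by rewrite dotC dotZl dotC. Qed.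

Lemma dotNl u v : dotRl (- u) v = - dotRl u v.
Proof. by rewrite -scaleN1r dotZl mulN1r. Qed.

Lemma dotNr u v : dotRl v (- u) = - dotRl v u.
Proof. by rewrite dotC dotNl dotC. Qed.

Lemma dotBl u v w : dotRl (u - v) w = dotRl u w - dotRl v w.
Proof. by rewrite dotDl dotNl. Qed.

Lemma dotBr u v w : dotRl w (u - v) = dotRl w u - dotRl w v.
Proof. by rewrite dotDr dotNr. Qed.

Lemma dot0l v : dotRl 0 v = 0.
Proof. by rewrite /dotRl big1 // => i _; rewrite mxE mul0r. Qed.

Lemma dot0r v : dotRl v 0 = 0.
Proof. by rewrite dotC dot0l. Qed.

Lemma dot_ge0 u : 0 <= dotRl u u.
Proof. by apply: sumr_ge0 => i _; rewrite -expr2 sqr_ge0. Qed.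

Lemma dot_eq0 u : dotRl u u = 0 -> u = 0.
Proof.
move=> /eqP; rewrite psumr_eq0; last by move=> i _; rewrite -expr2 sqr_ge0.
move=> /allP H; apply/rowP => i; rewrite mxE.
have := H i (mem_index_enum i); rewrite /= -expr2 sqrf_eq0 => /eqP ->.
by [].
Qed.

Lemma normRl_ge0 u : 0 <= normRl u.
Proof. exact: sqrtr_ge0. Qed.

Lemma normRl_sq u : normRl u ^+ 2 = dotRl u u.
Proof. by rewrite sqr_sqrtr // dot_ge0. Qed.

Lemma normRlZ (t : R) u : normRl (t *: u) = `|t| * normRl u.
Proof.
by rewrite /normRl dotZl dotZr mulrA -expr2 sqrtrM ?sqr_ge0 // sqrtr_sqr.
Qed.

Lemma normRlN u : normRl (- u) = normRl u.
Proof. by rewrite /normRl dotNl dotNr opprK. Qed.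

Lemma CS_sq u v : dotRl u v ^+ 2 <= dotRl u u * dotRl v v.
Proof.
have [v0|vn0] := eqVneq (dotRl v v) 0.
  by rewrite (dot_eq0 v0) dot0r expr0n /= dot0r mulr0.
have vp : 0 < dotRl v v by rewrite lt_def vn0 dot_ge0.
set t := dotRl u v / dotRl v v.
have := dot_ge0 (u - t *: v).
rewrite !dotBl !dotBr !dotZl !dotZr (dotC v u) /t => H.
rewrite -subr_ge0.
have -> : dotRl u u * dotRl v v - dotRl u v ^+ 2 =
  dotRl v v * (dotRl u u - dotRl u v / dotRl v v * dotRl u v -
    (dotRl u v / dotRl v v * dotRl u v -
     dotRl u v / dotRl v v * (dotRl u v / dotRl v v * dotRl v v))).
  by field; rewrite vn0.
by rewrite mulr_ge0 // ltW.
Qed.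

Lemma CS u v : `|dotRl u v| <= normRl u * normRl v.
Proof.
rewrite -sqrtrM ?dot_ge0 // -(sqrtr_sqr (dotRl u v)).
by rewrite ler_sqrt ?CS_sq // mulr_ge0 // dot_ge0.
Qed.

Lemma dot_le_norm u v : dotRl u v <= normRl u * normRl v.
Proof. exact: le_trans (ler_norm _) (CS u v). Qed.

Lemma dotD_le u v : dotRl (u + v) (u + v) <= 2 * dotRl u u + 2 * dotRl v v.
Proof.
rewrite !dotDl !dotDr (dotC v u).
have := dot_ge0 (u - v); rewrite !dotBl !dotBr (dotC v u) => H.
lra.
Qed.

End FinDim.

Section Descent.
Context {R : realType} {l : nat}.
Implicit Types u v w z h : 'rV[R]_l.

Lemma hg_derive (g : 'rV[R]_l -> R) z h (t : R) v :
  has_grad_Rl g (z + t *: h) v ->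
  is_derive t 1 (fun s : R => g (z + s *: h)) (dotRl v h).
Proof.
move=> Hg.
have Hc : (fun s : R => s^-1 *: (((fun s : R => g (z + s *: h)) \o shift t) (s *: 1)
    - g (z + t *: h))) @ 0^' --> dotRl v h.
  apply/cvgrPdist_le => e e0.
  set n := normRl h.
  have n0 : 0 <= n by exact: normRl_ge0.
  have e'0 : 0 < e / (n + 1) by rewrite divr_gt0 // ltr_wpDl.
  have [dl dl0 Hd] := Hg _ e'0.
  have dl'0 : 0 < dl / (n + 1) by rewrite divr_gt0 // ltr_wpDl.
  near=> s.
  have sn0 : s != 0 by near: s; exists 1 => //= y _.
  have sl : `|s| < dl / (n + 1) by near: s; exact: dnbhs0_lt.
  rewrite /= /shift /= [_%:A]mulr1.
  have -> : z + (s + t) *: h = (z + t *: h) + s *: h.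
    by rewrite scalerDl [s *: h + _]addrC addrA.
  have Hn : normRl (s *: h) < dl.
    rewrite normRlZ; apply: le_lt_trans (_ : `|s| * (n + 1) < dl).
      by rewrite ler_wpM2l // lerDl.
    by rewrite -ltr_pdivlMr // ltr_wpDl.
  have := Hd _ Hn; rewrite dotZr normRlZ => H1.
  have sp : 0 < `|s| by rewrite normr_gt0.
  have -> : dotRl v h - s^-1 *: (g (z + t *: h + s *: h) - g (z + t *: h)) =
     - s^-1 * (g (z + t *: h + s *: h) - g (z + t *: h) - s * dotRl v h).
    by rewrite /GRing.scale /=; field.
  rewrite normrM normrN normfV ler_pdivrMl //.
  apply: le_trans H1 _.
  rewrite mulrA -/n.
  have q1 : n / (n + 1) <= 1 by rewrite ler_pdivrMr ?ltr_wpDl // mul1r lerDl.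
  have -> : e / (n + 1) * `|s| * n = (`|s| * e) * (n / (n + 1)) by ring.
  by rewrite -[X in _ <= X]mulr1 ler_wpM2l // mulr_ge0 // ltW.
apply: DeriveDef; first by apply/cvg_ex; exists (dotRl v h).
by apply/cvg_lim.
Unshelve. all: by end_near. Qed.

Lemma has_grad_sublin (g : 'rV[R]_l -> R) a u v :
  has_grad_Rl g u v -> has_grad_Rl (fun w => g w - dotRl a w) u (v - a).
Proof.
move=> Hg e e0; have [dl dl0 Hd] := Hg e e0; exists dl => // h hl.
have := Hd h hl; congr (_ <= _); congr `|_|.
rewrite dotDr dotBl; ring.
Qed.

Lemma descent (g : 'rV[R]_l -> R) (L : R) z h vz :
  0 <= L -> LG_Rl L g -> has_grad_Rl g z vz ->
  `|g (z + h) - g z - dotRl vz h| <= L * normRl h ^+ 2.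
Proof.
move=> L0 [Hex Hlip] Hz.
pose G u := proj1_sig (cid (Hex u)).
have HG u : has_grad_Rl g u (G u) by rewrite /G; case: cid.
pose g' := fun w => g w - dotRl vz w.
pose phi := fun s : R => g' (z + s *: h).
have Hd (s : R) : is_derive s (1 : R) phi (dotRl (G (z + s *: h) - vz) h).
  exact/hg_derive/has_grad_sublin.
have [c c01 Hc] := @MVT R phi (fun s => dotRl (G (z + s *: h) - vz) h) 0 1 ltr01
  (fun x _ => Hd x) (derivable_within_continuous (fun x _ => @ex_derive _ _ _ _ _ _ _ (Hd x))).
have -> : g (z + h) - g z - dotRl vz h = phi 1 - phi 0.
  by rewrite /phi /g' scale1r scale0r addr0 dotDr; ring.
rewrite Hc subr0 mulr1.
apply: le_trans (CS _ _) _.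
have c0 : 0 <= c by move: c01; rewrite in_itv /= => /andP [/ltW].
have c1 : c <= 1 by move: c01; rewrite in_itv /= => /andP [_ /ltW].
have := Hlip _ _ _ _ (HG (z + c *: h)) Hz.
have -> : z + c *: h - z = c *: h by rewrite addrAC subrr add0r.
rewrite normRlZ ger0_norm // => H.
rewrite expr2 mulrA ler_wpM2r ?normRl_ge0 //.
apply: le_trans H _.
rewrite ler_wpM2l // -[X in _ <= X]mul1r ler_wpM2r ?normRl_ge0 //.
Qed.

End Descent.

Section L2facts.
Context {R : realType} {d : measure_display} {X : measurableType d}.
Variable mu : probability X R.
Context {l : nat}.
Implicit Types f g h : X -> 'rV[R]_l.

Definition mcomp f := forall i : 'I_l, measurable_fun [set: X] (fun x => f x 0 i).

Lemma meas_dot f g : mcomp f -> mcomp g ->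
  measurable_fun [set: X] (fun x => dotRl (f x) (g x)).
Proof.
move=> mf mg; apply: measurable_sum => i.
exact: measurable_funM.
Qed.

Lemma abs_dot_le (u v : 'rV[R]_l) : `|dotRl u v| <= dotRl u u + dotRl v v.
Proof.
apply: le_trans (CS u v) _.
rewrite -!normRl_sq.
have := normRl_ge0 u; have := normRl_ge0 v; nra.
Qed.

Lemma L2_mcomp f : L2 mu f -> mcomp f.
Proof. by case. Qed.

Lemma L2_int f : L2 mu f -> mu.-integrable [set: X] (fun x => (dotRl (f x) (f x))%:E).
Proof. by case. Qed.

Lemma int_le (F : X -> R) (Gb : X -> R) :
  measurable_fun [set: X] F ->
  (forall x, `|F x| <= Gb x) ->
  mu.-integrable [set: X] (fun x => (Gb x)%:E) ->
  mu.-integrable [set: X] (fun x => (F x)%:E).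
Proof.
move=> mF HF iG; apply: (le_integrable measurableT _ _ iG).
  exact/measurable_EFinP.
move=> x _ /=; rewrite lee_fin; apply: le_trans (HF x) _.
exact: ler_norm.
Qed.

Lemma intD (F1 F2 : X -> R) :
  mu.-integrable [set: X] (fun x => (F1 x)%:E) ->
  mu.-integrable [set: X] (fun x => (F2 x)%:E) ->
  mu.-integrable [set: X] (fun x => (F1 x + F2 x)%:E).
Proof. by move=> i1 i2; exact: (integrableD measurableT i1 i2). Qed.

Lemma intB (F1 F2 : X -> R) :
  mu.-integrable [set: X] (fun x => (F1 x)%:E) ->
  mu.-integrable [set: X] (fun x => (F2 x)%:E) ->
  mu.-integrable [set: X] (fun x => (F1 x - F2 x)%:E).
Proof. by move=> i1 i2; exact: (integrableB measurableT i1 i2). Qed.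

Lemma intZ (c : R) (F : X -> R) :
  mu.-integrable [set: X] (fun x => (F x)%:E) ->
  mu.-integrable [set: X] (fun x => (c * F x)%:E).
Proof. by move=> i; exact: (integrableZl measurableT c i). Qed.

Lemma int_meas (F : X -> R) :
  mu.-integrable [set: X] (fun x => (F x)%:E) -> measurable_fun [set: X] F.
Proof. by move=> /integrableP [/measurable_EFinP]. Qed.

Lemma int_cst (c : R) : mu.-integrable [set: X] (fun x => c%:E).
Proof. exact: (finite_measure_integrable_cst mu c measurableT). Qed.

Lemma int_dot f g : L2 mu f -> L2 mu g ->
  mu.-integrable [set: X] (fun x => (dotRl (f x) (g x))%:E).
Proof.
move=> [mf if_] [mg ig]; apply: (int_le (meas_dot mf mg) (fun x => abs_dot_le _ _)).
exact: intD.
Qed.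

Lemma mcompD f g : mcomp f -> mcomp g -> mcomp (fun x => f x + g x).
Proof.
move=> mf mg i; rewrite /=.
have -> : (fun x => (f x + g x) 0 i) = (fun x => f x 0 i + g x 0 i).
  by apply/funext => x; rewrite mxE.
exact: measurable_funD.
Qed.

Lemma mcompZ (w : X -> R) f : measurable_fun [set: X] w -> mcomp f ->
  mcomp (fun x => w x *: f x).
Proof.
move=> mw mf i; rewrite /=.
have -> : (fun x => (w x *: f x) 0 i) = (fun x => w x * f x 0 i).
  by apply/funext => x; rewrite mxE.
exact: measurable_funM.
Qed.

Lemma mcomp_cst (v : 'rV[R]_l) : mcomp (fun _ => v).
Proof. by move=> i; exact: measurable_cst. Qed.

Lemma L2D f g : L2 mu f -> L2 mu g -> L2 mu (fun x => f x + g x).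
Proof.
move=> [mf if_] [mg ig]; split; first exact: mcompD.
apply: (int_le (meas_dot (mcompD mf mg) (mcompD mf mg))).
  move=> x; rewrite ger0_norm ?dot_ge0 //; exact: dotD_le.
by apply: intD; [exact: (intZ 2 if_) | exact: (intZ 2 ig)].
Qed.

Lemma L2Zf (w : X -> R) f : measurable_fun [set: X] w -> L2 mu f ->
  mu.-integrable [set: X] (fun x => (w x ^+ 2 * dotRl (f x) (f x))%:E) ->
  L2 mu (fun x => w x *: f x).
Proof.
move=> mw [mf if_] iw; split; first exact: mcompZ.
apply: (eq_integrable measurableT _ _ _ iw) => x _.
by rewrite dotZl dotZr mulrA expr2.
Qed.

Lemma L2Z (c : R) f : L2 mu f -> L2 mu (fun x => c *: f x).
Proof.
move=> Hf; apply: (L2Zf (measurable_cst c) Hf).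
exact: (intZ (c ^+ 2) (L2_int Hf)).
Qed.

Lemma L2_cst (v : 'rV[R]_l) : L2 mu (fun _ => v).
Proof. split; [exact: mcomp_cst | exact: int_cst]. Qed.

Lemma L2B f g : L2 mu f -> L2 mu g -> L2 mu (fun x => f x - g x).
Proof.
move=> Hf Hg; have := L2D Hf (L2Z (-1) Hg).
by congr (L2 mu _); apply/funext => x; rewrite scaleN1r.
Qed.

Lemma ipL2_Dr f g h : L2 mu f -> L2 mu g -> L2 mu h ->
  ipL2 mu f (fun x => g x + h x) = ipL2 mu f g + ipL2 mu f h.
Proof.
move=> Hf Hg Hh; rewrite /ipL2 -RintegralD //; try exact: int_dot.
by apply: eq_Rintegral => x _; rewrite dotDr.
Qed.

Lemma ipL2_Br f g h : L2 mu f -> L2 mu g -> L2 mu h ->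
  ipL2 mu f (fun x => g x - h x) = ipL2 mu f g - ipL2 mu f h.
Proof.
move=> Hf Hg Hh; rewrite /ipL2 -RintegralB //; try exact: int_dot.
by apply: eq_Rintegral => x _; rewrite dotBr.
Qed.

Lemma ipL2_Bl f g h : L2 mu f -> L2 mu g -> L2 mu h ->
  ipL2 mu (fun x => g x - h x) f = ipL2 mu g f - ipL2 mu h f.
Proof.
move=> Hf Hg Hh; rewrite /ipL2 -RintegralB //; try exact: int_dot.
by apply: eq_Rintegral => x _; rewrite dotBl.
Qed.

Lemma ipL2_Zr (c : R) f g : L2 mu f -> L2 mu g ->
  ipL2 mu f (fun x => c *: g x) = c * ipL2 mu f g.
Proof.
move=> Hf Hg; rewrite /ipL2 -RintegralZl //; last exact: int_dot.
by apply: eq_Rintegral => x _; rewrite dotZr.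
Qed.

Lemma ipL2_Zl (c : R) f g : L2 mu f -> L2 mu g ->
  ipL2 mu (fun x => c *: g x) f = c * ipL2 mu g f.
Proof.
move=> Hf Hg; rewrite /ipL2 -RintegralZl //; last exact: int_dot.
by apply: eq_Rintegral => x _; rewrite dotZl.
Qed.

Lemma ipL2_ge0 f : 0 <= ipL2 mu f f.
Proof. by apply: Rintegral_ge0 => x _; exact: dot_ge0. Qed.

Lemma normL2_ge0 f : 0 <= normL2 mu f.
Proof. exact: sqrtr_ge0. Qed.

Lemma normL2_sq f : normL2 mu f ^+ 2 = ipL2 mu f f.
Proof. by rewrite sqr_sqrtr // ipL2_ge0. Qed.

Lemma normL2Z (c : R) f : L2 mu f ->
  normL2 mu (fun x => c *: f x) = `|c| * normL2 mu f.
Proof.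
move=> Hf; rewrite /normL2 ipL2_Zl ?ipL2_Zr //; last exact: L2Z.
by rewrite mulrA -expr2 sqrtrM ?sqr_ge0 // sqrtr_sqr.
Qed.

Lemma ae_le_Rintegral (F1 F2 : X -> R) :
  mu.-integrable [set: X] (fun x => (F1 x)%:E) ->
  mu.-integrable [set: X] (fun x => (F2 x)%:E) ->
  {ae mu, forall x, F1 x <= F2 x} ->
  Rintegral mu [set: X] F1 <= Rintegral mu [set: X] F2.
Proof.
move=> i1 i2 H; rewrite -subr_ge0 -RintegralB //.
have iB := intB i2 i1.
have mB := int_meas iB.
rewrite /Rintegral.
have -> : (\int[mu]_(x in [set: X]) ((F2 x - F1 x)%:E) =
           \int[mu]_(x in [set: X]) ((Num.max (F2 x - F1 x) 0)%:E))%E.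
  apply: ae_eq_integral => //.
  - exact/measurable_EFinP.
  - by apply/measurable_EFinP; apply: measurable_maxr => //; exact: measurable_cst.
  apply: filterS H => x Hx _; congr (_%:E).
  by rewrite max_l // subr_ge0.
apply: fine_ge0; apply: integral_ge0 => x _.
by rewrite lee_fin le_max lexx orbT.
Qed.

End L2facts.

Section SeqLemma.
Context {R : realType}.
Local Open Scope ereal_scope.

Lemma series_le_bound (u : nat -> R) (K : R) : (forall j, (0 <= u j)%R) ->
  (forall n, (\sum_(0 <= j < n) u j <= K)%R) ->
  \sum_(j <oo) (u j)%:E <= K%:E.
Proof.
move=> u0 HK; apply: lime_le.
  by apply: is_cvg_nneseries => n _ _; rewrite lee_fin.
by apply: nearW => n; rewrite sumEFin lee_fin.
Qed.

Lemma series_unbounded (u : nat -> R) : (forall j, (0 <= u j)%R) ->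
  (forall K : R, exists n, (K <= \sum_(0 <= j < n) u j)%R) ->
  \sum_(j <oo) (u j)%:E = +oo.
Proof.
move=> u0 HK.
have HS n : (\sum_(0 <= j < n) u j)%:E <= \sum_(j <oo) (u j)%:E.
  by rewrite -sumEFin; apply: nneseries_lim_ge => k _ _; rewrite lee_fin.
move: HS; case: (\sum_(j <oo) (u j)%:E) => [r| |] // HS.
  have [n Hn] := HK (r + 1)%R.
  have := HS n; rewrite lee_fin => H.
  have : (r + 1 <= r)%R by exact: le_trans Hn H.
  by move=> ?; exfalso; lra.
have := HS 0%N; by rewrite leeNy_eq.
Qed.

Lemma series_ge0 (u : nat -> R) n : (forall j, (0 <= u j)%R) -> (0 <= \sum_(0 <= j < n) u j)%R.
Proof. by move=> u0; apply: sumr_ge0 => j _. Qed.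

Lemma seq_lemma (m : nat -> R) : (forall j, (0 <= m j)%R) ->
  \sum_(j <oo) (m j)%:E = +oo ->
  let M := fun n => (\sum_(0 <= i < n) m i)%R in
  let c := fun j => (1 + M j.+1)^-1%R in
  \sum_(j <oo) (c j * m j)%:E = +oo /\
  \sum_(j <oo) (c j ^+ 2 * m j)%:E <= 1%:E.
Proof.
move=> m0 Hinf M c.
have M0 n : (0 <= M n)%R by exact: series_ge0.
have MS n : M n.+1 = (M n + m n)%R by rewrite /M big_nat_recr.
have Mmono a b : (a <= b)%N -> (M a <= M b)%R.
  move=> /subnK <-; elim: (b - a)%N => [|k IH]; first by rewrite add0n.
  by rewrite addSn MS; apply: le_trans IH _; rewrite lerDl.
have c0 j : (0 <= c j)%R by rewrite invr_ge0 addr_ge0.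
have Munb (K : R) : exists n, (K <= M n)%R.
  apply: contrapT => H.
  have H' n : (M n <= K)%R.
    have /negP : ~ (K <= M n)%R by move=> h; apply: H; exists n.
    by rewrite -ltNge => /ltW.
  have := series_le_bound m0 H'.
  by rewrite Hinf leye_eq.
split.
  apply: series_unbounded => [j|K]; first by rewrite mulr_ge0.
  have block a b : (a <= b)%N ->
    ((M b - M a) / (1 + M b) <= \sum_(a <= i < b) c i * m i)%R.
    move=> /subnK <-; elim: (b - a)%N => [|k IH].
      by rewrite add0n big_geq // subrr mul0r.
    rewrite addSn big_nat_recr ?leq_addl //=.
    apply: le_trans _ (lerD IH (lexx _)).
    rewrite /c MS.
    set A := M a; set B := M (k + a)%N; set mm := m (k + a)%N.
    have AB : (A <= B)%R by apply: Mmono; rewrite leq_addl.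
    have B0 : (0 <= B)%R := M0 _.
    have m0' : (0 <= mm)%R := m0 _.
    rewrite -/B -/mm.
    have h1 : ((B - A) / (1 + (B + mm)) <= (B - A) / (1 + B))%R.
      rewrite ler_wpM2l ?subr_ge0 // lef_pV2 ?posrE ?ltr_wpDr ?addr_ge0 //.
      by rewrite lerD2l lerDl.
    apply: le_trans (lerD h1 (lexx _)).
    by rewrite le_eqVlt; apply/orP; left; apply/eqP; field; rewrite gt_eqF // ltr_wpDr // addr_ge0.
  have step k : exists n, (k%:R <= 2 * \sum_(0 <= i < n) c i * m i)%R.
    elim: k => [|k [n Hn]]; first by exists 0%N; rewrite big_geq // mulr0.
    have [b Hb] := Munb (1 + 2 * M n)%R.
    have nb : (n <= b)%N.
      rewrite leqNgt; apply/negP => /ltnW /Mmono Hbn.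
      have := M0 n; have := le_trans Hb Hbn; lra.
    exists b; rewrite (big_cat_nat (leq0n n) nb) /= mulrDr -natr1.
    apply: lerD => //.
    have := block _ _ nb => Hbl.
    apply: le_trans _ (ler_wpM2l _ Hbl) => //.
    have Mb0 := M0 b.
    rewrite mulrA ler_pdivlMr ?ltr_wpDr //; lra.
  have [n Hn] := step (Num.truncn (2 * K)%R).+1.
  exists n.
  have := truncnS_gt (2 * K)%R => H1.
  have : (2 * K <= 2 * \sum_(0 <= i < n) c i * m i)%R.
    exact/ltW/(lt_le_trans H1 Hn).
  by rewrite ler_pM2l.
apply: series_le_bound => [j|n]; first by rewrite mulr_ge0 // sqr_ge0.
suff : (\sum_(0 <= i < n) c i ^+ 2 * m i <= 1 - (1 + M n)^-1)%R.
  move=> H; apply: le_trans H _; rewrite lerBlDr lerDl invr_ge0 addr_ge0 //.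
elim: n => [|n IH]; first by rewrite big_geq // /M big_geq // addr0 invr1 subrr.
rewrite big_nat_recr //=.
apply: le_trans (lerD IH (lexx _)) _.
rewrite /c MS.
set B := M n; set mm := m n.
have B0 : (0 <= B)%R := M0 _.
have m0' : (0 <= mm)%R := m0 _.
have p1 : (0 < 1 + B)%R by rewrite ltr_wpDr.
have p2 : (0 < 1 + (B + mm))%R by rewrite ltr_wpDr // addr_ge0.
have key : ((1 + (B + mm))^-1 ^+ 2 * mm <= (1 + B)^-1 - (1 + (B + mm))^-1)%R.
  have -> : ((1 + B)^-1 - (1 + (B + mm))^-1 = mm / ((1 + B) * (1 + (B + mm))))%R.
    by field; rewrite !gt_eqF.
  rewrite exprVn mulrC ler_wpM2l // lef_pV2 ?posrE ?exprn_gt0 ?mulr_gt0 //.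
  by rewrite expr2; apply: ler_wpM2r; [exact: ltW | rewrite lerD2l lerDl].
lra.
Qed.

End SeqLemma.

Section Resonance.
Context {R : realType} {d : measure_display} {X : measurableType d}.
Variable mu : probability X R.

Section Layers.
Variable phi : X -> R.
Hypothesis mphi : measurable_fun [set: X] phi.
Hypothesis phi0 : forall x, 0 <= phi x.

Let A (j : nat) := [set x | Num.truncn (phi x) = j].

Let mA j : measurable (A j).
Proof.
have -> : A j = [set: X] `&` phi @^-1` `[j%:R, j.+1%:R[.
  apply/seteqP; split => x /=.
    by move=> Hx; split => //; rewrite in_itv /= -truncn_eq ?phi0 // Hx.
  by move=> [_]; rewrite in_itv /= -truncn_eq ?phi0 // => /eqP.
exact: mphi.
Qed.

Let cover : \bigcup_j A j = [set: X].
Proof. by apply/seteqP; split => x // _; exists (Num.truncn (phi x)). Qed.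

Let triv : trivIset [set: nat] A.
Proof. by move=> i j _ _ [x [/= <- <-]]. Qed.

Lemma layer_meas (a : nat -> R) :
  measurable_fun [set: X] (fun x => a (Num.truncn (phi x))).
Proof.
move=> _ Y mY.
have -> : [set: X] `&` (fun x => a (Num.truncn (phi x))) @^-1` Y =
    \bigcup_(j in [set j | Y (a j)]) A j.
  apply/seteqP; split => x /=.
    by move=> [_ HY]; exists (Num.truncn (phi x)).
  by move=> [j /= HY ->].
by apply: bigcup_measurable => k _.
Qed.

Let mfin j : (\int[mu]_(x in A j) (phi x)%:E)%E \is a fin_num.
Proof.
rewrite ge0_fin_numE; last by apply: integral_ge0 => x _; rewrite lee_fin.
apply: (@le_lt_trans _ _ (\int[mu]_(x in A j) (cst (j.+1%:R)%:E x))%E).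
  apply: ge0_le_integral => //.
  - by move=> x _; rewrite lee_fin.
  - by apply/measurable_EFinP; apply: measurable_funS mphi.
  - move=> x /= Hx; rewrite lee_fin; apply/ltW.
    by rewrite -Hx; exact: truncnS_gt.
rewrite integral_cst //.
have := fin_num_measure mu (A j) (mA j).
by rewrite -ge0_fin_numE ?mule_ge0 // => Hf; rewrite fin_numM.
Qed.

Definition layer_m j := fine (\int[mu]_(x in A j) (phi x)%:E)%E.

Lemma layer_m0 j : 0 <= layer_m j.
Proof. by apply: fine_ge0; apply: integral_ge0 => x _; rewrite lee_fin. Qed.

Lemma layer_int (a : nat -> R) : (forall j, 0 <= a j) ->
  (\int[mu]_x (a (Num.truncn (phi x)) * phi x)%:E =
   \sum_(j <oo) (a j * layer_m j)%:E)%E.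
Proof.
move=> a0.
have mF : measurable_fun [set: X] (fun x => (a (Num.truncn (phi x)) * phi x)%:E).
  apply/measurable_EFinP; apply: measurable_funM => //; exact: layer_meas.
have := @ge0_integral_bigcup _ _ _ mu A (fun x => (a (Num.truncn (phi x)) * phi x)%:E) mA.
rewrite cover => ->; first last.
- exact: triv.
- by move=> x _; rewrite lee_fin mulr_ge0.
- exact: mF.
apply: eq_eseriesr => j _.
rewrite EFinM /layer_m fineK // -ge0_integralZl //; last 3 first.
- by apply/measurable_EFinP; apply: measurable_funS mphi.
- by move=> x _; rewrite lee_fin.
- by rewrite lee_fin.
by apply: eq_integral => x /[1!inE] /= ->; rewrite EFinM.
Qed.

Lemma layer_sum :
  (\int[mu]_x (phi x)%:E = \sum_(j <oo) (layer_m j)%:E)%E.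
Proof.
have E1 := @layer_int (fun=> 1) (fun _ => ler01).
rewrite (_ : (\int[mu]_x (phi x)%:E = \int[mu]_x (1 * phi x)%:E)%E); last first.
  by apply: eq_integral => x _; rewrite mul1r.
by rewrite E1; apply: eq_eseriesr => j _; rewrite mul1r.
Qed.

End Layers.

Lemma resonance (phi : X -> R) :
  measurable_fun [set: X] phi -> (forall x, 0 <= phi x) ->
  (forall w : X -> R, measurable_fun [set: X] w -> (forall x, 0 <= w x) ->
     mu.-integrable [set: X] (fun x => (w x ^+ 2 * phi x)%:E) ->
     (\int[mu]_x (w x * phi x)%:E < +oo)%E) ->
  mu.-integrable [set: X] (fun x => (phi x)%:E).
Proof.
move=> mphi phi0 H.
apply/integrableP; split; first exact/measurable_EFinP.
apply: contrapT => /negP; rewrite -leNgt leye_eq => /eqP Hinf.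
have Hinf' : (\sum_(j <oo) (layer_m phi j)%:E = +oo)%E.
  rewrite -layer_sum //; rewrite -Hinf; apply: eq_integral => x _.
  by rewrite gee0_abs // lee_fin.
have [H1 H2] := seq_lemma (layer_m0 phi0) Hinf'.
set M := fun n => (\sum_(0 <= i < n) layer_m phi i)%R.
set c := fun j => (1 + M j.+1)^-1.
have c0 j : 0 <= c j.
  by rewrite invr_ge0 addr_ge0 // sumr_ge0 // => i _; exact: layer_m0.
pose w x := c (Num.truncn (phi x)).
have mw : measurable_fun [set: X] w by exact: layer_meas.
have := H w mw (fun x => c0 _).
rewrite (layer_int mphi phi0 c0) H1 ltxx.
move=> Himp; apply: notF; apply: Himp.
apply/integrableP; split.
  by apply/measurable_EFinP; apply: measurable_funM => //; exact: measurable_funX.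
have -> : (\int[mu]_x `|(w x ^+ 2 * phi x)%:E| =
    \int[mu]_x ((c (Num.truncn (phi x)) ^+ 2) * phi x)%:E)%E.
  by apply: eq_integral => x _; rewrite gee0_abs // lee_fin mulr_ge0 // sqr_ge0.
rewrite (layer_int mphi phi0 (a := fun j => c j ^+ 2)); last by move=> j; rewrite sqr_ge0.
by apply: le_lt_trans H2 _; rewrite ltry.
Qed.

End Resonance.

Lemma dot_delta {R : realType} {l : nat} (v : 'rV[R]_l) (i : 'I_l) :
  dotRl v (delta_mx 0 i) = v 0 i.
Proof.
rewrite /dotRl (bigD1 i) //= big1 ?addr0.
  by rewrite mxE !eqxx /= mulr1.
by move=> j /negbTE ji; rewrite mxE ji andbF mulr0.
Qed.

Lemma norm_delta {R : realType} {l : nat} (i : 'I_l) :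
  normRl (delta_mx 0 i : 'rV[R]_l) = 1.
Proof. by rewrite /normRl dot_delta mxE !eqxx sqrtr1. Qed.

Lemma natSinv_lt {R : realType} (dl : R) : 0 < dl ->
  \forall n \near \oo, n.+1%:R^-1 < dl.
Proof. by move=> dl0; exact: (near_infty_natSinv_lt (PosNum dl0)). Qed.

Section Main.
Context {R : realType} {d : measure_display} {X : measurableType d}.
Variable mu : probability X R.
Context {l : nat} (L : R) (iota : X -> 'rV[R]_l -> R).
Hypothesis L0 : 0 <= L.
Hypothesis Hint : integrand mu iota.
Hypothesis HLG : {ae mu, forall x, LG_Rl L (iota x)}.

Lemma int_iota f : L2 mu f -> mu.-integrable [set: X] (fun x => (iota x (f x))%:E).
Proof. by case: Hint => _ [_ H]; exact: H. Qed.

Lemma meas_iota f : L2 mu f -> measurable_fun [set: X] (fun x => iota x (f x)).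
Proof. by move=> Hf; apply: int_meas; exact: int_iota. Qed.

Lemma grad_mcomp f G : L2 mu f -> (forall x, has_grad_Rl (iota x) (f x) (G x)) ->
  mcomp G.
Proof.
move=> Hf HG i.
set e : 'rV[R]_l := delta_mx 0 i.
pose q (n : nat) x := n.+1%:R * (iota x (f x + n.+1%:R^-1 *: e) - iota x (f x)).
apply: (@measurable_fun_cvg _ _ _ _ q).
  move=> n; apply: measurable_funM; first exact: measurable_cst.
  apply: measurable_funB; last exact: meas_iota.
  exact: (meas_iota (L2D Hf (L2_cst _ (n.+1%:R^-1 *: e)))).
move=> x _; apply/cvgrPdist_le => eps eps0.
have [dl dl0 Hd] := HG x eps eps0.
near=> n.
have nl : n.+1%:R^-1 < dl by near: n; exact: natSinv_lt.
have Hn : normRl (n.+1%:R^-1 *: e) < dl.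
  by rewrite normRlZ norm_delta mulr1 ger0_norm.
have := Hd _ Hn; rewrite dotZr dot_delta normRlZ norm_delta mulr1 => H.
rewrite /q.
have np : 0 < n.+1%:R :> R by rewrite ltr0n.
have -> : G x 0 i - n.+1%:R * (iota x (f x + n.+1%:R^-1 *: e) - iota x (f x)) =
   - n.+1%:R * (iota x (f x + n.+1%:R^-1 *: e) - iota x (f x) - n.+1%:R^-1 * G x 0 i).
  by field; rewrite gt_eqF.
rewrite normrM normrN (ger0_norm (ltW np)).
rewrite (ger0_norm (_ : 0 <= n.+1%:R^-1)) in H; last by rewrite invr_ge0 ltW.
by rewrite -ler_pdivlMl // [_^-1 * eps]mulrC.
Unshelve. all: by end_near. Qed.

Lemma descent_ae : {ae mu, forall x, forall z h v, has_grad_Rl (iota x) z v ->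
   `|iota x (z + h) - iota x z - dotRl v h| <= L * normRl h ^+ 2}.
Proof.
by apply: filterS HLG => x Hx z h v Hv; exact: descent.
Qed.

Lemma grad_L2 f G : L2 mu f -> (forall x, has_grad_Rl (iota x) (f x) (G x)) ->
  L2 mu G.
Proof.
move=> Hf HG.
have mG := grad_mcomp Hf HG.
split => //.
apply: resonance.
- exact: meas_dot.
- by move=> x; exact: dot_ge0.
move=> w mw w0 iw.
pose h x := w x *: G x.
have Hh : L2 mu h.
  split; first exact: mcompZ.
  apply: (eq_integrable measurableT _ _ _ iw) => x _.
  by rewrite /h dotZl dotZr mulrA expr2.
pose S x := `|iota x (f x + h x)| + `|iota x (f x)| + L * dotRl (h x) (h x).
have iS : mu.-integrable [set: X] (fun x => (S x)%:E).
  apply: intD; last exact: (intZ L (L2_int Hh)).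
  apply: intD.
    exact: (integrable_abse (int_iota (L2D Hf Hh))).
  exact: (integrable_abse (int_iota Hf)).
have S0 x : 0 <= S x.
  by rewrite /S !addr_ge0 // mulr_ge0 // dot_ge0.
apply: (@le_lt_trans _ _ (\int[mu]_x (S x)%:E)%E).
  apply: ae_ge0_le_integral => //.
  - by move=> x _; rewrite lee_fin mulr_ge0 // dot_ge0.
  - apply/measurable_EFinP; apply: measurable_funM => //; exact: meas_dot.
  - by move=> x _; rewrite lee_fin.
  - by case/integrableP: iS.
  apply: filterS descent_ae => x Hx _.
  rewrite lee_fin.
  have := Hx (f x) (h x) (G x) (HG x).
  rewrite /h dotZr -/(h x) normRl_sq => H.
  apply: le_trans (ler_norm _) _.
  rewrite /S /h.
  set A := iota x (f x + w x *: G x) - iota x (f x).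
  set B := w x * dotRl (G x) (G x).
  have T : `|B| <= `|A| + `|A - B|.
    by have := ler_normB A (A - B); rewrite opprB addrC subrK.
  have T2 := ler_normB (iota x (f x + w x *: G x)) (iota x (f x)).
  move: H; rewrite /h -/A -/B => H.
  lra.
have -> : (\int[mu]_x (S x)%:E = \int[mu]_x `|(S x)%:E|)%E.
  by apply: eq_integral => x _; rewrite gee0_abs // lee_fin.
by case/integrableP: iS.
Qed.


Notation J := (Ifun mu iota).

Lemma grad_has f G : L2 mu f -> (forall x, has_grad_Rl (iota x) (f x) (G x)) ->
  has_grad_L2 mu J f G.
Proof.
move=> Hf HG e e0.
have HG2 := grad_L2 Hf HG.
have L1 : 0 < L + 1 by rewrite ltr_wpDl.
exists (e / (L + 1)); first by rewrite divr_gt0.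
move=> h Hh hn.
have Hfh := L2D Hf Hh.
have i1 := int_iota Hfh.
have i2 := int_iota Hf.
have i3 := int_dot HG2 Hh.
rewrite /Ifun /ipL2 -RintegralB // -RintegralB //; last exact: intB.
set F := fun x => _.
have iF : mu.-integrable [set: X] (fun x => (F x)%:E) by exact/intB/i3/intB.
apply: le_trans (le_normr_Rintegral measurableT iF) _.
apply: le_trans (_ : Rintegral mu [set: X] (fun x => L * dotRl (h x) (h x)) <= _).
  apply: ae_le_Rintegral.
  - exact: (integrable_abse iF).
  - exact: (intZ L (L2_int Hh)).
  apply: filterS descent_ae => x Hx.
  by have := Hx (f x) (h x) (G x) (HG x); rewrite normRl_sq.
rewrite RintegralZl //; last exact: L2_int.
rewrite -/(ipL2 mu h h) -normL2_sq.
have n0 := normL2_ge0 mu h.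
move: hn; rewrite ltr_pdivlMr // => hn.
nra.
Qed.

Lemma grad_unique f G1 G2 : L2 mu G1 -> L2 mu G2 ->
  has_grad_L2 mu J f G1 -> has_grad_L2 mu J f G2 ->
  ipL2 mu (fun x => G1 x - G2 x) (fun x => G1 x - G2 x) = 0.
Proof.
move=> H1 H2 g1 g2.
set D := fun x => G1 x - G2 x.
have HD : L2 mu D := L2B H1 H2.
rewrite -normL2_sq.
set n := normL2 mu D.
have n0 : 0 <= n := normL2_ge0 mu D.
have [n00|np] := eqVneq n 0; first by rewrite n00 expr0n.
have npos : 0 < n by rewrite lt_def np n0.
exfalso.
have e0 : 0 < n / 4 by rewrite divr_gt0.
have [d1 d10 Hd1] := g1 _ e0.
have [d2 d20 Hd2] := g2 _ e0.
set m := Num.min d1 d2.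
have m0 : 0 < m by rewrite lt_min d10 d20.
set t := m / (2 * n).
have t0 : 0 < t by rewrite divr_gt0 // mulr_gt0.
set h := fun x => t *: D x.
have Hh : L2 mu h := L2Z t HD.
have nh : normL2 mu h = m / 2.
  rewrite /h normL2Z // ger0_norm ?ltW // -/n /t.
  by field; rewrite np.
have nh1 : normL2 mu h < d1.
  rewrite nh; have : m <= d1 by rewrite ge_min lexx.
  move=> ?; lra.
have nh2 : normL2 mu h < d2.
  rewrite nh; have : m <= d2 by rewrite ge_min lexx orbT.
  move=> ?; lra.
have A1 := Hd1 _ Hh nh1.
have A2 := Hd2 _ Hh nh2.
have E : ipL2 mu G1 h - ipL2 mu G2 h = t * n ^+ 2.
  by rewrite -ipL2_Bl // -/D /h ipL2_Zr // normL2_sq.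
set a := J (fun x => f x + h x) - J f.
have Hb : `|ipL2 mu G1 h - ipL2 mu G2 h| <= n / 4 * normL2 mu h + n / 4 * normL2 mu h.
  have -> : ipL2 mu G1 h - ipL2 mu G2 h = (a - ipL2 mu G2 h) - (a - ipL2 mu G1 h) by ring.
  exact: le_trans (ler_normB _ _) (lerD A2 A1).
have Hc : t * n ^+ 2 <= n / 4 * (m / 2) + n / 4 * (m / 2).
  by rewrite -E -nh; exact: le_trans (ler_norm _) Hb.
have Et : t * n ^+ 2 = m / 2 * n by rewrite /t; field; rewrite np.
rewrite Et in Hc.
have m2 : 0 < m / 2 by rewrite divr_gt0.
nra.
Qed.

Lemma ip0_ae (D : X -> 'rV[R]_l) : L2 mu D -> ipL2 mu D D = 0 -> {ae mu, forall x, D x = 0}.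
Proof.
move=> HD H0.
have iD := L2_int HD.
have mD : measurable_fun [set: X] (fun x => (dotRl (D x) (D x))%:E).
  by case/integrableP: iD.
have := integrable_fin_num measurableT iD.
move=> fin.
have I0 : (\int[mu]_x (dotRl (D x) (D x))%:E = 0)%E.
  by rewrite -(fineK fin); move: H0; rewrite /ipL2 /Rintegral => ->.
have : (\int[mu]_x `|(dotRl (D x) (D x))%:E| = 0)%E.
  rewrite -I0; apply: eq_integral => x _; rewrite gee0_abs // lee_fin dot_ge0 //.
move/(ae_eq_integral_abs mu measurableT mD) => Hae.
apply: filterS Hae => x /(_ I) /= [] H; exact: dot_eq0.
Qed.

Definition Gr (f : X -> 'rV[R]_l) (x : X) : 'rV[R]_l :=
  proj1_sig (cid (Hint.2.1 x (f x))).

Lemma HGr f x : has_grad_Rl (iota x) (f x) (Gr f x).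
Proof. by rewrite /Gr; case: cid. Qed.

Lemma grad_ae f G : L2 mu f -> L2 mu G -> has_grad_L2 mu J f G ->
  {ae mu, forall x, G x = Gr f x}.
Proof.
move=> Hf HG g.
have HGr2 := grad_L2 Hf (HGr f).
have := grad_unique HG HGr2 g (grad_has Hf (HGr f)).
move/(ip0_ae (L2B HG HGr2)).
by apply: filterS => x /eqP; rewrite subr_eq0 => /eqP.
Qed.

Lemma exist_grad f : L2 mu f -> exists G, L2 mu G /\ has_grad_L2 mu J f G.
Proof.
move=> Hf; exists (Gr f); split; first exact: grad_L2 (HGr f).
exact: grad_has (HGr f).
Qed.


Lemma LG_part : LG_L2 mu L J.
Proof.
split; first exact: exist_grad.
move=> f g Gf Gg Hf Hg HGf HGg gf gg.
have E1 := grad_ae Hf HGf gf.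
have E2 := grad_ae Hg HGg gg.
have Hfg := L2B Hf Hg.
have HGfg := L2B HGf HGg.
have Hle : ipL2 mu (fun x => Gf x - Gg x) (fun x => Gf x - Gg x) <=
           L ^+ 2 * ipL2 mu (fun x => f x - g x) (fun x => f x - g x).
  rewrite /ipL2 -RintegralZl //; last exact: L2_int.
  apply: ae_le_Rintegral; first exact: L2_int.
    exact: (intZ _ (L2_int Hfg)).
  have E12 : {ae mu, forall x, Gf x = Gr f x /\ Gg x = Gr g x}.
    by apply: filterS2 E1 E2 => x a b; split.
  apply: filterS2 E12 HLG => x [e1 e2] [_ Hl].
  rewrite e1 e2 -!normRl_sq.
  have := Hl _ _ _ _ (HGr f x) (HGr g x) => H.
  have a0 := normRl_ge0 (Gr f x - Gr g x).
  have b0 := normRl_ge0 (f x - g x).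
  rewrite -exprMn; nra.
rewrite /normL2.
apply: le_trans (_ : Num.sqrt (L ^+ 2 * ipL2 mu (fun x => f x - g x) (fun x => f x - g x)) <= _).
  by rewrite ler_sqrt // mulr_ge0 ?sqr_ge0 ?ipL2_ge0.
by rewrite sqrtrM ?sqr_ge0 // sqrtr_sqr ger0_norm.
Qed.

Lemma PL_key lam f G g : 0 < lam -> {ae mu, forall x, PL_Rl lam (iota x)} ->
  L2 mu f -> L2 mu G -> has_grad_L2 mu J f G -> L2 mu g ->
  lam * (J f - J g) <= 2^-1 * normL2 mu G ^+ 2.
Proof.
move=> lam0 HPL Hf HG gG Hg.
have E := grad_ae Hf HG gG.
have i1 := int_iota Hf.
have i2 := int_iota Hg.
rewrite normL2_sq /Ifun -RintegralB // /ipL2 -RintegralZl //; last exact: intB.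
rewrite -RintegralZl //; last exact: L2_int.
apply: ae_le_Rintegral.
- exact/intZ/intB.
- exact/intZ/L2_int.
apply: filterS2 E HPL => x Ex [lb [_ Hineq]].
have H1 := Hineq _ _ (HGr f x).
have H2 : inf (range (iota x)) <= iota x (g x) by apply: (ge_inf lb); exists (g x).
rewrite Ex -normRl_sq.
apply: le_trans H1.
by apply: ler_wpM2l; [exact: ltW | lra].
Qed.

Lemma PL_part lam : 0 < lam -> {ae mu, forall x, PL_Rl lam (iota x)} ->
  PL_L2 mu lam J.
Proof.
move=> lam0 HPL.
have H0 : L2 mu (fun _ : X => (0 : 'rV[R]_l)) := L2_cst _ 0.
have [G0 [HG0 gG0]] := exist_grad H0.
set b := J (fun _ => 0) - (2^-1 * normL2 mu G0 ^+ 2) / lam.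
have Hb : lbound (J @` (@L2 R d X mu l)) b.
  move=> _ [g Hg <-].
  have := PL_key lam0 HPL H0 HG0 gG0 Hg.
  rewrite /b -ler_pdivlMl // => H.
  rewrite mulrC in H; lra.
split; first by exists b.
split; first exact: exist_grad.
move=> f G Hf HG gG.
have lb : has_lbound (J @` (@L2 R d X mu l)) by exists b.
have ne : (J @` (@L2 R d X mu l)) !=set0 by exists (J f); exists f.
have Hinf : J f - (2^-1 * normL2 mu G ^+ 2) / lam <= inf (J @` (@L2 R d X mu l)).
  apply: lb_le_inf => // _ [g Hg <-].
  have := PL_key lam0 HPL Hf HG gG Hg.
  rewrite -ler_pdivlMl // => H.
  rewrite mulrC in H; lra.
rewrite -ler_pdivlMl //.
move: Hinf; rewrite lerBlDr addrC -lerBlDr.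
by rewrite mulrC.
Qed.

End Main.

Unset Implicit Arguments.
Set Strict Implicit.

Theorem lemma4 (R : realType) (d : measure_display) (X : measurableType d)
  (mu : probability X R) (l : nat) (Liota : R) (iota : X -> 'rV[R]_l -> R) :
  0 <= Liota ->
  integrand mu iota ->
  {ae mu, forall x, LG_Rl Liota (iota x)} ->
  [/\ (forall f G : X -> 'rV[R]_l, L2 mu f ->
         (forall x, has_grad_Rl (iota x) (f x) (G x)) ->
         L2 mu G /\ has_grad_L2 mu (Ifun mu iota) f G),
      LG_L2 mu Liota (Ifun mu iota)
    & forall lam : R, 0 < lam ->
        {ae mu, forall x, PL_Rl lam (iota x)} ->
        PL_L2 mu lam (Ifun mu iota)].
Proof.
move=> L0 Hint HLG; split.
- move=> f G Hf HG; split; first exact: (grad_L2 L0 Hint HLG Hf HG).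
  exact: (grad_has L0 Hint HLG Hf HG).
- exact: (LG_part L0 Hint HLG).
- move=> lam lam0 HPL; exact: (PL_part L0 Hint HLG lam0 HPL).
Qed.
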